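(* Let $M_1=(E,r_1)$ and $M_2=(E,r_2)$ be demi-matroids on the same finite ground set $E$ such that $r_2(X)\le r_1(X)$ for all $X\subseteq E$. Define $\rho(X)=r_1(X)-r_2(X)$ for $X\subseteq E$. Then $(E,\rho)$ is a demi-matroid if and only if $\mathcal{E}_{M_1}\subseteq \mathcal{E}_{M_2}$.
   Context: A demi-matroid is a pair $(E,r)$ with $E$ a finite set and $r:2^E\to\mathbb{N}$ satisfying (R1) $r(\emptyset)=0$ and (R2) for every $X\subseteq E$ and $x\in E$, $r(X)\le r(X\cup\{x\})\le r(X)+1$. For a demi-matroid $M=(E,r)$, $\mathcal{E}_M=\{(X,x): X\subseteq E,\ x\in X,\ r(X\setminus\{x\})=r(X)\}$. *)

(* Defs.v *)
From mathcomp Require Import all_boot.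
Set Implicit Arguments. Unset Strict Implicit. Unset Printing Implicit Defensive.

Definition demi_matroid (E : finType) (r : {set E} -> nat) : Prop :=
  r set0 = 0 /\
  (forall (X : {set E}) (x : E), r X <= r (x |: X) <= (r X).+1).

Definition calE (E : finType) (r : {set E} -> nat) : {set {set E} * E} :=
  [set p : {set E} * E | (p.2 \in p.1) && (r (p.1 :\ p.2) == r p.1)].

(* Main.v *)
Require Import Defs.
From mathcomp Require Import all_boot.
From mathcomp Require Import zify.

Theorem mainTheorem1 (E : finType) (r1 r2 : {set E} -> nat)
  (h1 : demi_matroid r1) (h2 : demi_matroid r2)
  (hle : forall X : {set E}, r2 X <= r1 X) :
  demi_matroid (fun X => r1 X - r2 X) <-> calE r1 \subset calE r2.
Proof.
case: h1 => h10 h1; case: h2 => h20 h2.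
split.
- case=> _ hr; apply/subsetP => -[Y x]; rewrite !inE /= => /andP [xY /eqP e].
  rewrite xY /=; apply/eqP.
  have := hr (Y :\ x) x; rewrite setD1K //.
  have := h2 (Y :\ x) x; rewrite setD1K //.
  have := hle Y; have := hle (Y :\ x). lia.
- move=> sub; split; first by rewrite h10 h20.
  move=> X x.
  case: (boolP (x \in X)) => xX.
    have -> : x |: X = X by apply/setUidPr; rewrite sub1set.
    lia.
  have := h1 X x; have := h2 X x; have := hle X; have := hle (x |: X).
  case: (eqVneq (r1 (x |: X)) (r1 X)) => e1; last lia.
  have : (x |: X, x) \in calE r1 by rewrite inE /= setU11 /= setU1K // e1.
  move/(subsetP sub); rewrite !inE /= setU1K // => /andP [_ /eqP e2].
  lia.
Qed.
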